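(* Let $\mathcal X,\mathcal Y$ be Polish spaces, $(\mu,\nu)\in\mathcal P(\mathcal X)\times\mathcal P(\mathcal Y)$ and $C:\mathcal X\times\mathcal P(\mathcal Y)\to\overline{\mathbb{R}}$ measurable. Then the values of \[ \inf_{(X,Y,\mathcal F):\ X\sim\mu,\ Y\sim\nu,\ \mathcal F\supset\sigma(X)}\mathbb E\big[C(X,\mathscr L(Y|\mathcal F))\big] \quad\text{and}\quad \inf_{P\in\Lambda(\mu,\nu)}\int_{\mathcal X\times\mathcal P(\mathcal Y)}C(x,p)\,P(dx,dp) \] coincide, where the first infimum runs over triplets consisting of random variables $X,Y$ and a $\sigma$-algebra $\mathcal F\supset\sigma(X)$ on an arbitrary probability space.
   Context: $\overline{\mathbb{R}}=\mathbb{R}\cup\{\pm\infty\}$; $\mathscr L(Y|\mathcal F)$ denotes the conditional law of $Y$ given $\mathcal F$. The intensity map $\hat I:\mathcal P(\mathcal X\times\mathcal P(\mathcal Y))\to\mathcal P(\mathcal X\times\mathcal Y)$ is defined by $\hat I(P)(f)=\int\int f(x,y)\,p(dy)\,P(dx,dp)$ for bounded continuous $f$, and $\Lambda(\mu,\nu):=\{P\in\mathcal P(\mathcal X\times\mathcal P(\mathcal Y)):\hat I(P)\text{ has marginals }\mu,\nu\}$. *)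

(* Defs.v *)
From HB Require Import structures.
From mathcomp Require Import all_boot all_order all_algebra.
From mathcomp Require Import all_classical all_reals all_analysis.
From mathcomp Require Import measurable_realfun.
Set Implicit Arguments. Unset Strict Implicit. Unset Printing Implicit Defensive.
Import Order.TTheory GRing.Theory Num.Theory.
Local Open Scope classical_set_scope.
Local Open Scope ring_scope.

Definition metric_open (T : Type) (R : realType) (dist : T -> T -> R) : set (set T) :=
  [set U | forall x, U x -> exists e : R, 0 < e /\ forall y, dist x y < e -> U y].

Definition polish_borel (R : realType) (d : measure_display) (T : measurableType d) : Prop :=
  exists dist : T -> T -> R,
    [/\ (forall x y, 0 <= dist x y),
        (forall x y, dist x y = 0 <-> x = y),
        (forall x y, dist x y = dist y x) &
        (forall x y z, dist x z <= dist x y + dist y z)] /\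
    [/\
        (forall u : nat -> T,
           (forall e : R, 0 < e -> exists N, forall m n, (N <= m)%N -> (N <= n)%N ->
               dist (u m) (u n) < e) ->
           exists l, forall e : R, 0 < e -> exists N, forall n, (N <= n)%N -> dist (u n) l < e),
        (exists D : nat -> T, forall x (e : R), 0 < e -> exists n, dist x (D n) < e)
      & @measurable d T = <<s metric_open dist >> ].

Local Open Scope ereal_scope.

Definition is_cond_law (R : realType) (dO : measure_display) (O : measurableType dO)
  (P : probability O R) (dY : measure_display) (Y : measurableType dY)
  (F : set (set O)) (Yv : O -> Y) (K : O -> pprobability Y R) : Prop :=
  (forall G : set (pprobability Y R), measurable G -> F (K @^-1` G)) /\
  (forall A, F A -> forall B : set Y, measurable B ->
      P (A `&` Yv @^-1` B) = \int[P]_(w in A) (K w : probability Y R) B).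

Definition value_randomized (R : realType) (dX dY : measure_display)
  (X : measurableType dX) (Y : measurableType dY)
  (mu : probability X R) (nu : probability Y R)
  (C : X * pprobability Y R -> \bar R) : \bar R :=
  ereal_inf [set v | exists (dO : measure_display) (O : measurableType dO)
      (P : probability O R) (Xv : O -> X) (Yv : O -> Y) (F : set (set O))
      (K : O -> pprobability Y R),
    [/\ measurable_fun setT Xv, measurable_fun setT Yv,
        (forall A, measurable A -> P (Xv @^-1` A) = mu A) &
        (forall B, measurable B -> P (Yv @^-1` B) = nu B)] /\
    [/\ sigma_algebra setT F, F `<=` measurable,
        (forall A, measurable A -> F (Xv @^-1` A)),
        is_cond_law P F Yv K
      & v = \int[P]_w C (Xv w, K w)]].

Definition intensity (R : realType) (dX dY : measure_display)
  (X : measurableType dX) (Y : measurableType dY)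
  (P : probability (X * pprobability Y R)%type R) (S : set (X * Y)) : \bar R :=
  \int[P]_z (z.2 : probability Y R) (xsection S z.1).

Definition Lambda (R : realType) (dX dY : measure_display)
  (X : measurableType dX) (Y : measurableType dY)
  (mu : probability X R) (nu : probability Y R)
  (P : probability (X * pprobability Y R)%type R) : Prop :=
  (forall A : set X, measurable A -> intensity P (A `*` setT) = mu A) /\
  (forall B : set Y, measurable B -> intensity P (setT `*` B) = nu B).

Definition value_Lambda (R : realType) (dX dY : measure_display)
  (X : measurableType dX) (Y : measurableType dY)
  (mu : probability X R) (nu : probability Y R)
  (C : X * pprobability Y R -> \bar R) : \bar R :=
  ereal_inf [set \int[P]_z C z | P in Lambda mu nu].

(* Main.v *)
Require Import Defs.
From HB Require Import structures.
From mathcomp Require Import all_boot all_order all_algebra.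
From mathcomp Require Import all_classical all_reals all_analysis.
From mathcomp Require Import measurable_realfun.
Set Implicit Arguments. Unset Strict Implicit. Unset Printing Implicit Defensive.
Import Order.TTheory GRing.Theory Num.Theory.
Local Open Scope classical_set_scope.
Local Open Scope ereal_scope.

Section Qmeas.
Context (R : realType) (dZ dY : measure_display) (Z : measurableType dZ) (Y : measurableType dY).
Variable P : probability (Z * pprobability Y R)%type R.

Definition Qm (S : set ((Z * pprobability Y R) * Y)) : \bar R :=
  \int[P]_z (z.2 : probability Y R) (xsection S z).

Lemma Qm_mfun S : measurable S ->
  measurable_fun setT (fun z : (Z * pprobability Y R)%type => (z.2 : probability Y R) (xsection S z)).
Proof.
move=> mS.
have := @measurable_fun_xsection_finite_kernel _ _ _ _ R
   (kprobability (@measurable_snd _ _ Z (pprobability Y R))) S.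
rewrite inE; exact.
Qed.

Let Qm0 : Qm set0 = 0.
Proof. rewrite /Qm; apply: integral0_eq => z _. 
by rewrite (_ : xsection _ _ = set0) ?measure0 //; apply/seteqP; split => y //=; rewrite /xsection/= inE. Qed.

Let Qm_ge0 S : 0 <= Qm S.
Proof. by apply: integral_ge0 => z _. Qed.

Let Qm_sigma : semi_sigma_additive Qm.
Proof.
move=> F mF tF mU.
have E : Qm (\bigcup_n F n) = \sum_(n <oo) Qm (F n).
  rewrite /Qm -integral_nneseries //; last by move=> n; exact: Qm_mfun.
  apply: eq_integral => z _.
  rewrite xsection_bigcup measure_semi_bigcup //.
  - by move=> n; apply: measurable_xsection.
  - exact: trivIset_xsection.
  - by rewrite -xsection_bigcup; apply: measurable_xsection.
rewrite E; apply: is_cvg_nneseries => n _ _; exact: Qm_ge0.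
Qed.

HB.instance Definition _ := isMeasure.Build _ _ _ Qm Qm0 Qm_ge0 Qm_sigma.

Let Qm_setT : Qm setT = 1.
Proof.
rewrite /Qm (eq_integral (fun _ => 1)) ?integral_cst //= ?mul1e ?probability_setT //.
move=> z _; rewrite (_ : xsection _ _ = setT) ?probability_setT //.
by apply/seteqP; split => y //=; rewrite /xsection/= inE.
Qed.

HB.instance Definition _ := Measure_isProbability.Build _ _ _ Qm Qm_setT.


Lemma Qm_fst A : measurable A -> Qm (fst @^-1` A) = P A.
Proof.
move=> mA; rewrite /Qm -[in RHS](setIT A) -integral_indic //.
apply: eq_integral => z _.
rewrite /indic; case: (boolP (z \in A)) => zA /=.
  rewrite (_ : xsection _ _ = setT) ?probability_setT //.
  apply/seteqP; split => y //= _; rewrite /xsection/= inE /=; by rewrite inE in zA.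
rewrite (_ : xsection _ _ = set0) ?measure0 //.
apply/seteqP; split => y //=; rewrite /xsection/= inE /= => Az.
by move: zA; rewrite notin_setE.
Qed.

Lemma Qm_integral_fst_ge0 (g : (Z * pprobability Y R)%type -> \bar R) :
  measurable_fun setT g -> (forall z, 0 <= g z) ->
  \int[Qm]_w g w.1 = \int[P]_z g z.
Proof.
move=> mg g0.
have := @ge0_integral_pushforward _ _ _ _ R fst measurable_fst (Qm) setT g measurableT mg (fun y _ => g0 y).
rewrite preimage_setT => <-.
apply: eq_measure_integral => A mA _ /=.
by rewrite /pushforward Qm_fst.
Qed.

Lemma Qm_integral_fst (g : (Z * pprobability Y R)%type -> \bar R) :
  measurable_fun setT g ->
  \int[Qm]_w g w.1 = \int[P]_z g z.
Proof.
move=> mg; change (\int[Qm]_w (g \o fst) w = \int[P]_z g z).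
rewrite integralE [RHS]integralE funepos_comp funeneg_comp.
rewrite -(Qm_integral_fst_ge0 (g := g^\+)); last 2 first.
  exact: measurable_funepos. by move=> z; exact: funepos_ge0.
rewrite -(Qm_integral_fst_ge0 (g := g^\-)); last 2 first.
  exact: measurable_funeneg. by move=> z; exact: funeneg_ge0.
reflexivity.
Qed.

End Qmeas.

Section PF.
Context (R : realType) (d d' : measure_display) (T : measurableType d) (T' : measurableType d').
Variables (P : probability T R) (f : T -> T').

Definition pfwd (mf : measurable_fun setT f) := pushforward P f.

Variable mf : measurable_fun setT f.

Let pf0 : pfwd mf set0 = 0.
Proof. by rewrite /pfwd /pushforward preimage_set0 measure0. Qed.
Let pf_ge0 A : 0 <= pfwd mf A.
Proof. rewrite /pfwd /pushforward; apply: measure_ge0. Qed.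
Let pf_sigma : semi_sigma_additive (pfwd mf).
Proof.
move=> F mF tF mUF; rewrite /pfwd /pushforward preimage_bigcup.
apply: measure_semi_sigma_additive.
- by move=> n; rewrite -[X in measurable X]setTI; exact: mf.
- apply/trivIsetP => /= i j _ _ ij; rewrite -preimage_setI.
  by move/trivIsetP : tF => /(_ _ _ _ _ ij) ->//; rewrite preimage_set0.
- by rewrite -preimage_bigcup -[X in measurable X]setTI; exact: mf.
Qed.
HB.instance Definition _ := isMeasure.Build _ _ _ (pfwd mf) pf0 pf_ge0 pf_sigma.
Let pf_setT : pfwd mf setT = 1.
Proof. by rewrite /pfwd /pushforward preimage_setT probability_setT. Qed.
HB.instance Definition _ := Measure_isProbability.Build _ _ _ (pfwd mf) pf_setT.

Lemma pfwd_integral (g : T' -> \bar R) : measurable_fun setT g ->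
  \int[pfwd mf]_y g y = \int[P]_x g (f x).
Proof.
move=> mg.
have E h : measurable_fun setT h -> (forall y, 0 <= h y) -> \int[pfwd mf]_y h y = \int[P]_x h (f x).
  move=> mh h0.
  have := @ge0_integral_pushforward _ _ _ _ R f mf P setT h measurableT mh (fun y _ => h0 y).
  rewrite preimage_setT => <-.
  by apply: eq_measure_integral => A mA _.
change (\int[pfwd mf]_y g y = \int[P]_x (g \o f) x).
rewrite integralE [RHS]integralE [in RHS]funepos_comp [in RHS]funeneg_comp E; last 2 first.
  exact: measurable_funepos. by move=> z; exact: funepos_ge0.
rewrite E; last 2 first.
  exact: measurable_funeneg. by move=> z; exact: funeneg_ge0.
reflexivity.
Qed.

End PF.
Unset Implicit Arguments.
Set Strict Implicit.

Theorem corollary3p3 (R : realType) (dX dY : measure_display)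
  (X : measurableType dX) (Y : measurableType dY) :
  polish_borel R X -> polish_borel R Y ->
  forall (mu : probability X R) (nu : probability Y R)
         (C : X * pprobability Y R -> \bar R),
  measurable_fun setT C ->
  value_randomized mu nu C = value_Lambda mu nu C.
Proof.
move=> _ _ mu nu C mC.
rewrite /value_randomized /value_Lambda; congr ereal_inf.
have msnd := @measurable_snd _ _ X (pprobability Y R).
have mk B : measurable B -> measurable_fun setT (fun z : (X * pprobability Y R)%type => (z.2 : probability Y R) B).
  by move=> mB; exact: (measurable_kernel (kprobability msnd) B mB).
apply/seteqP; split.
- move=> v [dd [OO [Pm [Xv [Yv [F [K [[mX mY hX hY] [sF Fm FX [KF Kcond] ->]]]]]]]]].
  have mK : measurable_fun setT K.
    by move=> _ G mG; rewrite setTI; apply: Fm; exact: KF.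
  have mphi : measurable_fun setT (fun w => (Xv w, K w)).
    by apply/measurable_fun_pairP; split.
  exists (pfwd Pm mphi); last by rewrite pfwd_integral.
  split.
  + move=> A mA; rewrite /intensity.
    rewrite (eq_integral (fun z : (X * pprobability Y R)%type => (\1_A z.1)%:E)); last first.
      move=> z _; rewrite /indic; case: (boolP (z.1 \in A)) => zA /=.
        rewrite (_ : xsection _ _ = setT) ?probability_setT //.
        apply/seteqP; split => y //= _; rewrite /xsection/= inE /=; split => //; by rewrite inE in zA.
      rewrite (_ : xsection _ _ = set0) ?measure0 //.
      apply/seteqP; split => y //=; rewrite /xsection/= inE /= => -[Az _].
      by move: zA; rewrite notin_setE.
    rewrite pfwd_integral; last first.
      apply/measurable_EFinP; apply: measurableT_comp => //; exact: measurable_indic.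
    rewrite -hX //.
    rewrite (eq_integral (fun w => (\1_(Xv @^-1` A) w)%:E)) //.
    by rewrite integral_indic ?setIT //; rewrite -[X in measurable X]setTI; exact: mX.
  + move=> B mB; rewrite /intensity.
    rewrite (eq_integral (fun z : (X * pprobability Y R)%type => (z.2 : probability Y R) B)); last first.
      move=> z _; congr (_ _); apply/seteqP; split => y /=; rewrite /xsection/= inE //=.
      by case.
    rewrite pfwd_integral; last exact: mk.
    rewrite -hY // -[Yv @^-1` B]setTI Kcond //.
    by rewrite -(preimage_setT Xv); apply: FX.
- move=> v [P0 [hA hB] <-].
  pose O := ((X * pprobability Y R) * Y)%type.
  exists _, O, (Qm P0), (fun w : O => w.1.1), (fun w : O => w.2),
    (preimage_set_system setT fst (@measurable _ (X * pprobability Y R)%type)),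
    (fun w : O => w.1.2).
  split; [split|split].
  + exact: measurableT_comp.
  + exact: measurable_snd.
  + move=> A mA; rewrite -hA // /Qm /intensity /=.
    apply: (@eq_integral _ _ _ P0 setT) => z _.
    congr (_ _); apply/seteqP; split => y; rewrite /xsection/= !inE //=.
    by case.
  + move=> B mB; rewrite -hB // /Qm /intensity /=.
    apply: (@eq_integral _ _ _ P0 setT) => z _.
    congr (_ _); apply/seteqP; split => y; rewrite /xsection/= !inE //=.
    by case.
  + apply: sigma_algebra_preimage; exact: sigma_algebra_measurable.
  + move=> _ [B mB <-]; exact: measurable_fst.
  + move=> A mA; exists (A `*` setT); first exact: measurableX.
    by apply/seteqP; split => w /=; [case=> _ []|move=> ?; split].
  + split.
    * move=> G mG; exists (snd @^-1` G).
        by rewrite -[X in measurable X]setTI; exact: msnd.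
      by rewrite setTI.
    * move=> _ [A' mA' <-] B mB.
      rewrite integral_mkcond.
      have -> : (fun w : O => (w.1.2 : probability Y R) B) \_ (setT `&` fst @^-1` A')
          = (fun z => (\1_A' z)%:E * (z.2 : probability Y R) B) \o fst.
        apply/funext => w; rewrite /patch /indic /=.
        case: (boolP (w \in _)) => h; case: (boolP (w.1 \in A')) => h' /=.
        - by rewrite mul1e.
        - by move: h h'; rewrite !inE /= => -[_ ?]; rewrite notin_setE.
        - by move: h h'; rewrite notin_setE !inE /= => h ?; exfalso; apply: h.
        - by rewrite mul0e.
      rewrite (Qm_integral_fst P0 (g := fun z => (\1_A' z)%:E * (z.2 : probability Y R) B)); last first.
        apply: emeasurable_funM; last exact: mk.
        by apply/measurable_EFinP; exact: measurable_indic.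
      rewrite /Qm; apply: eq_integral => z _.
      rewrite /indic; case: (boolP (z \in A')) => zA /=.
        rewrite mul1e; congr (_ _); apply/seteqP; split => y; rewrite /xsection/= !inE /=.
          by case.
        by move=> ?; split => //; rewrite inE in zA.
      rewrite mul0e (_ : xsection _ _ = set0) ?measure0 //.
      apply/seteqP; split => y //=; rewrite /xsection/= inE /= => -[[_ Az] _].
      by move: zA; rewrite notin_setE.
  + rewrite -(Qm_integral_fst P0 mC).
    by apply: (@eq_integral _ _ _ (Qm P0) setT) => -[[x p] y] _.
Qed.
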